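(* Every flat $\curlyvee$-algebra is functional, and a direct product of functional algebras of signature $(\curlyvee)$ is functional.
   Context: For sets $X,Y$, $\mathrm{Par}(X,Y)$ is the set of partial functions from $X$ to $Y$, viewed as sets of ordered pairs. For $f,g\in\mathrm{Par}(X,Y)$, $g-f$ is the restriction of $g$ to $X\setminus\mathrm{dom}(f)$ and restricted union is $f\curlyvee g=(f-g)\cup(f\cap g)\cup(g-f)$. An algebra $(S,\curlyvee)$ is functional if it is isomorphic to $(A,\curlyvee)$ for some sets $X,Y$ and some $A\subseteq\mathrm{Par}(X,Y)$ closed under restricted union. A flat $\curlyvee$-algebra is an algebra $(S,\curlyvee)$ with an element $0\in S$ such that $a\curlyvee b=0$ whenever $a,b$ are distinct and both different from $0$, and $a\curlyvee a=a$, $a\curlyvee 0=0\curlyvee a=a$ for all $a\in S$. *)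

(* Defs.v *)
(* Partial functions are represented as functional relations
   X -> Y -> Prop, i.e. sets of ordered pairs, as in the paper. *)

Definition par (X Y : Type) := X -> Y -> Prop.

Definition is_partial_fun {X Y : Type} (f : par X Y) : Prop :=
  forall x y y', f x y -> f x y' -> y = y'.

Definition dom {X Y : Type} (f : par X Y) (x : X) : Prop := exists y, f x y.

Definition rdiff {X Y : Type} (g f : par X Y) : par X Y :=
  fun x y => g x y /\ ~ dom f x.

Definition rinter {X Y : Type} (f g : par X Y) : par X Y :=
  fun x y => f x y /\ g x y.

Definition runion {X Y : Type} (f g : par X Y) : par X Y :=
  fun x y => rdiff f g x y \/ rinter f g x y \/ rdiff g f x y.

Definition functional (S : Type) (op : S -> S -> S) : Prop :=
  exists (X Y : Type) (A : par X Y -> Prop),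
    (forall f, A f -> is_partial_fun f) /\
    (forall f g, A f -> A g -> A (runion f g)) /\
    exists phi : S -> par X Y,
      (forall a b, phi a = phi b -> a = b) /\
      (forall f, A f <-> exists s, phi s = f) /\
      (forall a b, phi (op a b) = runion (phi a) (phi b)).

Definition flat (S : Type) (op : S -> S -> S) : Prop :=
  exists z : S,
    (forall a b, a <> b -> a <> z -> b <> z -> op a b = z) /\
    (forall a, op a a = a /\ op a z = a /\ op z a = a).

Definition prod_op {I : Type} (S : I -> Type) (op : forall i, S i -> S i -> S i)
  (a b : forall i, S i) : forall i, S i := fun i => op i (a i) (b i).

(* Main.v *)
Require Import Defs.
From Stdlib Require Import Classical ClassicalEpsilon FunctionalExtensionality PropExtensionality Eqdep.

Lemma par_ext {X Y : Type} (f g : par X Y) : (forall x y, f x y <-> g x y) -> f = g.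
Proof.
  intros H. apply functional_extensionality; intro x.
  apply functional_extensionality; intro y. apply propositional_extensionality; auto.
Qed.

Lemma flat_part (S : Type) (op : S -> S -> S) : flat S op -> functional S op.
Proof.
  intros [z [Hd Hz]].
  set (phi := fun (a : S) (_ : unit) (y : S) => y = a /\ a <> z).
  assert (Hhom : forall a b, phi (op a b) = runion (phi a) (phi b)).
  { intros a b. apply par_ext. intros [] y. unfold runion, rdiff, rinter, dom, phi.
    destruct (classic (a = z)) as [Ha|Ha]; [subst a|];
    [ destruct (Hz b) as (_ & _ & ->) |];
    [ split; [ intros H; right; right; split; [exact H| intros [y' [_ F]]; auto]
             | intros [[[_ F] _]|[[[_ F] _]|[H _]]]; [tauto|tauto|exact H]] |].
    destruct (classic (b = z)) as [Hb|Hb]; [subst b|].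
    { destruct (Hz a) as (_ & -> & _).
      split; [ intros H; left; split; [exact H| intros [y' [_ F]]; auto]
             | intros [[H _]|[[_ [_ F]]|[[_ F] _]]]; [exact H|tauto|tauto]]. }
    destruct (classic (a = b)) as [Hab|Hab]; [subst b|].
    { destruct (Hz a) as (-> & _ & _).
      split; [ intros H; right; left; auto
             | intros [[_ F]|[[H _]|[_ F]]]; [exfalso; apply F; eauto|exact H|exfalso; apply F; eauto]]. }
    rewrite (Hd a b Hab Ha Hb).
    split; [ intros [_ F]; tauto |].
    intros [[_ F]|[[[H1 _] [H2 _]]|[_ F]]]; [exfalso; apply F; eauto| congruence |exfalso; apply F; eauto]. }
  exists unit, S, (fun f => exists s, phi s = f).
  split; [| split].
  - intros f [s <-] x y y' [H1 _] [H2 _]; congruence.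
  - intros f g [a <-] [b <-]. exists (op a b). apply Hhom.
  - exists phi. split; [| split].
    + intros a b Hab.
      destruct (classic (a = z)) as [Ha|Ha]; destruct (classic (b = z)) as [Hb|Hb].
      * congruence.
      * assert (H : phi b tt b) by (split; auto). rewrite <- Hab in H. destruct H; congruence.
      * assert (H : phi a tt a) by (split; auto). rewrite Hab in H. destruct H; congruence.
      * assert (H : phi a tt a) by (split; auto). rewrite Hab in H. destruct H; congruence.
    + intros f; split; auto.
    + exact Hhom.
Qed.

Section Prod.
Variables (I : Type) (S : I -> Type) (op : forall i, S i -> S i -> S i).
Hypothesis HF : forall i, functional (S i) (op i).

Definition cX (i : I) : Type := proj1_sig (constructive_indefinite_description _ (HF i)).
Lemma cX_spec i : exists (Y : Type) (A : par (cX i) Y -> Prop),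
    (forall f, A f -> is_partial_fun f) /\
    (forall f g, A f -> A g -> A (runion f g)) /\
    exists phi : S i -> par (cX i) Y,
      (forall a b, phi a = phi b -> a = b) /\
      (forall f, A f <-> exists s, phi s = f) /\
      (forall a b, phi (op i a b) = runion (phi a) (phi b)).
Proof. exact (proj2_sig (constructive_indefinite_description _ (HF i))). Qed.
Definition cY (i : I) : Type := proj1_sig (constructive_indefinite_description _ (cX_spec i)).
Lemma cY_spec i : exists (A : par (cX i) (cY i) -> Prop),
    (forall f, A f -> is_partial_fun f) /\
    (forall f g, A f -> A g -> A (runion f g)) /\
    exists phi : S i -> par (cX i) (cY i),
      (forall a b, phi a = phi b -> a = b) /\
      (forall f, A f <-> exists s, phi s = f) /\
      (forall a b, phi (op i a b) = runion (phi a) (phi b)).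
Proof. exact (proj2_sig (constructive_indefinite_description _ (cX_spec i))). Qed.
Definition cA (i : I) := proj1_sig (constructive_indefinite_description _ (cY_spec i)).
Lemma cA_spec i :
    (forall f, cA i f -> is_partial_fun f) /\
    (forall f g, cA i f -> cA i g -> cA i (runion f g)) /\
    exists phi : S i -> par (cX i) (cY i),
      (forall a b, phi a = phi b -> a = b) /\
      (forall f, cA i f <-> exists s, phi s = f) /\
      (forall a b, phi (op i a b) = runion (phi a) (phi b)).
Proof. exact (proj2_sig (constructive_indefinite_description _ (cY_spec i))). Qed.
Definition cphi (i : I) := proj1_sig (constructive_indefinite_description _ (proj2 (proj2 (cA_spec i)))).
Lemma cphi_spec i :
      (forall a b, cphi i a = cphi i b -> a = b) /\
      (forall f, cA i f <-> exists s, cphi i s = f) /\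
      (forall a b, cphi i (op i a b) = runion (cphi i a) (cphi i b)).
Proof. exact (proj2_sig (constructive_indefinite_description _ (proj2 (proj2 (cA_spec i))))). Qed.

Lemma cpf i (s : S i) : is_partial_fun (cphi i s).
Proof. apply (proj1 (cA_spec i)). apply (proj1 (proj2 (cphi_spec i))). eauto. Qed.

Definition Phi (a : forall i, S i) : par {i : I & cX i} {i : I & cY i} :=
  fun p y => exists y', y = existT _ (projT1 p) y' /\ cphi (projT1 p) (a (projT1 p)) (projT2 p) y'.

Lemma Phi_at a i x y : Phi a (existT _ i x) (existT _ i y) <-> cphi i (a i) x y.
Proof.
  unfold Phi; simpl; split.
  - intros [y' [E H]]. apply inj_pair2 in E. subst; auto.
  - intros H; eauto.
Qed.

Lemma Phi_dom a i x : dom (Phi a) (existT _ i x) <-> dom (cphi i (a i)) x.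
Proof.
  unfold dom, Phi; simpl; split.
  - intros [y [y' [_ H]]]; eauto.
  - intros [y H]; eauto.
Qed.

Lemma Phi_hom a b : Phi (prod_op S op a b) = runion (Phi a) (Phi b).
Proof.
  apply par_ext. intros [i x] y. unfold prod_op.
  unfold runion, rdiff, rinter. rewrite !Phi_dom.
  split.
  - intros [y' [E H]]; simpl in *. subst y.
    rewrite (proj2 (proj2 (cphi_spec i))) in H.
    unfold runion, rdiff, rinter in H. rewrite !Phi_at. exact H.
  - intros H. destruct y as [j y'].
    assert (j = i /\ (runion (cphi i (a i)) (cphi i (b i)) x) =
           (runion (cphi i (a i)) (cphi i (b i)) x)) as _ by (split; [|reflexivity]; 
      destruct H as [[[y0 [E _]] _]|[[[y0 [E _]] _]|[[y0 [E _]] _]]];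
      simpl in E; exact (f_equal (@projT1 _ _) E)).
    assert (Hj : j = i).
    { destruct H as [[[y0 [E _]] _]|[[[y0 [E _]] _]|[[y0 [E _]] _]]];
      simpl in E; exact (f_equal (@projT1 _ _) E). }
    subst j. rewrite !Phi_at in H. apply Phi_at.
    rewrite (proj2 (proj2 (cphi_spec i))). exact H.
Qed.

Lemma prod_part : functional (forall i, S i) (prod_op S op).
Proof.
  exists {i : I & cX i}, {i : I & cY i}, (fun f => exists s, Phi s = f).
  split; [| split].
  - intros f [s <-] [i x] y1 y2 [y1' [E1 H1]] [y2' [E2 H2]]; simpl in *; subst.
    f_equal. eapply cpf; eauto.
  - intros f g [a <-] [b <-]. exists (prod_op S op a b). apply Phi_hom.
  - exists Phi. split; [| split].
    + intros a b Hab. apply functional_extensionality_dep; intro i.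
      apply (proj1 (cphi_spec i)). apply par_ext; intros x y.
      rewrite <- !Phi_at, Hab. tauto.
    + intros f; split; auto.
    + exact Phi_hom.
Qed.
End Prod.

Theorem proposition4p3 :
  (forall (S : Type) (op : S -> S -> S), flat S op -> functional S op) /\
  (forall (I : Type) (S : I -> Type) (op : forall i, S i -> S i -> S i),
      (forall i, functional (S i) (op i)) ->
      functional (forall i, S i) (prod_op S op)).
Proof.
  split; [exact flat_part|].
  intros I S op H. exact (prod_part I S op H).
Qed.
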